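(* Let $x^0=x^1\in\mathbb{R}^n$ and let $\{x^k\}$ be generated by $$x^{k+1}=x^k-\omega\nabla f_{\mathbf{S}_k}(x^k)+\beta(x^k-x^{k-1}),\qquad k\ge1,$$ where $0\le\beta<1$, $\omega>0$ and $\omega+2\beta<2$. Let $x^*\in\mathbb{R}^n$ be any vector with $f(x^* )=0$ and let $\hat x^k=\frac1k\sum_{t=1}^k x^t$. Then for all $k\ge1$ $$\mathbb{E}[f(\hat x^k)]\le\frac{(1-\beta)^2\|x^0-x^*\|_{\mathbf{B}}^2+2\omega\beta f(x^0)}{2\omega(2-2\beta-\omega)\,k}.$$
   Context: Let $\mathbf{A}\in\mathbb{R}^{m\times n}$ and $b\in\mathbb{R}^m$ be such that the linear system $\mathbf{A}x=b$ is consistent, and let $\mathcal{L}=\{x\in\mathbb{R}^n:\mathbf{A}x=b\}$. Let $\mathbf{B}\in\mathbb{R}^{n\times n}$ be symmetric positive definite, $\langle x,y\rangle_{\mathbf{B}}=x^\top\mathbf{B}y$, $\|x\|_{\mathbf{B}}=\sqrt{x^\top\mathbf{B}x}$. Let $\mathcal{D}$ be a probability distribution over random real matrices $\mathbf{S}$ with $m$ rows (any number of columns). For $\mathbf{S}\sim\mathcal{D}$ set $\mathbf{H}=\mathbf{S}(\mathbf{S}^\top\mathbf{A}\mathbf{B}^{-1}\mathbf{A}^\top\mathbf{S})^\dagger\mathbf{S}^\top$ ($\dagger$ denotes the Moore–Penrose pseudoinverse) and $\mathbf{Z}=\mathbf{A}^\top\mathbf{H}\mathbf{A}$; $\mathbb{E}[\mathbf{Z}]$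 is assumed finite. Define $f_{\mathbf{S}}(x)=\tfrac12(\mathbf{A}x-b)^\top\mathbf{H}(\mathbf{A}x-b)$, $f(x)=\mathbb{E}_{\mathbf{S}\sim\mathcal{D}}[f_{\mathbf{S}}(x)]$, and $\nabla f_{\mathbf{S}}(x)=\mathbf{B}^{-1}\mathbf{A}^\top\mathbf{H}(\mathbf{A}x-b)$ (the gradient of $f_{\mathbf{S}}$ with respect to $\langle\cdot,\cdot\rangle_{\mathbf{B}}$). The matrices $\mathbf{S}_k$ are drawn i.i.d. from $\mathcal{D}$, independently of everything else. *)

(* Defs.v *)
From HB Require Import structures.
From mathcomp Require Import all_boot all_order all_algebra.
From mathcomp Require Import all_classical all_reals all_analysis.
Set Implicit Arguments. Unset Strict Implicit. Unset Printing Implicit Defensive.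
Import Order.TTheory GRing.Theory Num.Theory.
Local Open Scope ring_scope.
Local Open Scope classical_set_scope.

Definition is_MP (R : realType) (p q : nat) (M : 'M[R]_(p, q)) (X : 'M[R]_(q, p)) : Prop :=
  [/\ M *m X *m M = M, X *m M *m X = X, (M *m X)^T = M *m X & (X *m M)^T = X *m M].

(* The Moore--Penrose pseudoinverse (exists and is unique for real matrices). *)
Definition mpinv (R : realType) (p q : nat) (M : 'M[R]_(p, q)) : 'M[R]_(q, p) :=
  xget 0 [set X | is_MP M X].

Definition spd (R : realType) (n : nat) (B : 'M[R]_n) : Prop :=
  B^T = B /\ forall x : 'cV[R]_n, x != 0 -> 0 < (x^T *m B *m x) 0 0.

Definition normB2 (R : realType) (n : nat) (B : 'M[R]_n) (x : 'cV[R]_n) : R :=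
  (x^T *m B *m x) 0 0.

Section Sketch.
Variables (R : realType) (m n : nat) (A : 'M[R]_(m, n)) (b : 'cV[R]_m) (B : 'M[R]_n).
Variables (d : measure_display) (T : measurableType d).
(* a sketch sample t : T determines a sketch matrix S t with m rows and q t columns;
   taking T to be the space of sketch matrices itself recovers the paper's setting *)
Variables (q : T -> nat) (S : forall t : T, 'M[R]_(m, q t)).

Definition Hmat (t : T) : 'M[R]_m :=
  S t *m mpinv ((S t)^T *m A *m invmx B *m A^T *m S t) *m (S t)^T.

Definition Zmat (t : T) : 'M[R]_n := A^T *m Hmat t *m A.

Definition fS (t : T) (x : 'cV[R]_n) : R :=
  2^-1 * (((A *m x - b)^T *m Hmat t *m (A *m x - b)) 0 0).

(* B-gradient of f_S *)
Definition gradfS (t : T) (x : 'cV[R]_n) : 'cV[R]_n :=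
  invmx B *m A^T *m Hmat t *m (A *m x - b).

Definition fexp (P : probability T R) (x : 'cV[R]_n) : \bar R :=
  (\int[P]_t (fS t x)%:E)%E.

(* Heavy-ball iterates driven by a list of sketches [S_1; ...; S_j]:
   returns (x^j, x^{j+1}), starting from (x^0, x^1) = (x0, x0). *)
Definition hb_step (omega beta : R) (xx : 'cV[R]_n * 'cV[R]_n) (t : T)
  : 'cV[R]_n * 'cV[R]_n :=
  (xx.2, xx.2 - omega *: gradfS t xx.2 + beta *: (xx.2 - xx.1)).

Definition hb_pair (omega beta : R) (x0 : 'cV[R]_n) (s : seq T) :=
  foldl (hb_step omega beta) (x0, x0) s.

(* x^{j+1} as a function of the sketches S_1, ..., S_j (the first j of s) *)
Definition hb_iter (omega beta : R) (x0 : 'cV[R]_n) (s : seq T) (j : nat) : 'cV[R]_n :=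
  (hb_pair omega beta x0 (take j s)).2.

(* \hat x^k = (1/k) sum_{t=1}^k x^t, as a function of s = [S_1; ...; S_{k-1}] *)
Definition hb_avg (omega beta : R) (x0 : 'cV[R]_n) (k : nat) (s : seq T) : 'cV[R]_n :=
  (k%:R)^-1 *: \sum_(j < k) hb_iter omega beta x0 s j.

End Sketch.

(* Expectation over N i.i.d. draws S_1, ..., S_N ~ P of g [S_1; ...; S_N]
   (iterated integral, i.e. integral w.r.t. the product measure P^N). *)
Fixpoint Eiid (d : measure_display) (T : measurableType d) (R : realType)
  (P : probability T R) (N : nat) (g : seq T -> \bar R) : \bar R :=
  match N with
  | 0 => g [::]
  | N'.+1 => (\int[P]_t Eiid P N' (fun s => g (t :: s)))%E
  end.

(* Main.v *)
Require Import Defs.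
From HB Require Import structures.
From mathcomp Require Import all_boot all_order all_algebra.
From mathcomp Require Import all_classical all_reals all_analysis.
Import Order.TTheory GRing.Theory Num.Theory.
Local Open Scope ring_scope.
Set Implicit Arguments. Unset Strict Implicit.
From mathcomp Require Import ring lra.
Section QF.
Variables (R : realType) (n : nat).
Implicit Types (M : 'M[R]_n) (u v w : 'cV[R]_n).

Definition qf M u v : R := (u^T *m M *m v) 0 0.

Lemma qfDl M u w v : qf M (u + w) v = qf M u v + qf M w v.
Proof. by rewrite /qf linearD /= !mulmxDl mxE. Qed.
Lemma qfDr M u w v : qf M v (u + w) = qf M v u + qf M v w.
Proof. by rewrite /qf !mulmxDr mxE. Qed.
Lemma qfZl M a u v : qf M (a *: u) v = a * qf M u v.
Proof. by rewrite /qf linearZ /= -!scalemxAl mxE. Qed.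
Lemma qfZr M a u v : qf M v (a *: u) = a * qf M v u.
Proof. by rewrite /qf -!scalemxAr mxE. Qed.
Lemma qfNl M u v : qf M (- u) v = - qf M u v.
Proof. by rewrite -scaleN1r qfZl mulN1r. Qed.
Lemma qfNr M u v : qf M v (- u) = - qf M v u.
Proof. by rewrite -scaleN1r qfZr mulN1r. Qed.
Lemma qfBl M u w v : qf M (u - w) v = qf M u v - qf M w v.
Proof. by rewrite qfDl qfNl. Qed.
Lemma qfBr M u w v : qf M v (u - w) = qf M v u - qf M v w.
Proof. by rewrite qfDr qfNr. Qed.
Lemma qf_sym M u v : M^T = M -> qf M u v = qf M v u.
Proof.
move=> sM; rewrite /qf. have -> : (u^T *m M *m v) 0 0 = ((u^T *m M *m v)^T) 0 0 by rewrite [RHS]mxE.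
by rewrite !trmx_mul trmxK sM mulmxA.
Qed.
Lemma qf0l M v : qf M 0 v = 0.
Proof. by rewrite /qf linear0 !mul0mx mxE. Qed.
End QF.

Lemma MP_uniq (R : realType) p r (M : 'M[R]_(p, r)) X Y :
  is_MP M X -> is_MP M Y -> X = Y.
Proof.
case=> h1 h2 h3 h4 [k1 k2 k3 k4].
have eMX : M *m X = M *m Y.
  have e : M *m X = (M *m X)^T *m (M *m Y)^T.
    rewrite (_ : (M *m X)^T *m (M *m Y)^T = (M *m Y *m M *m X)^T); last first.
      by rewrite !trmx_mul !mulmxA.
    by rewrite k1 h3.
  by rewrite e h3 k3 mulmxA h1.
have eXM : X *m M = Y *m M.
  have e : X *m M = (Y *m M)^T *m (X *m M)^T.
    rewrite (_ : (Y *m M)^T *m (X *m M)^T = (X *m (M *m Y *m M))^T); last first.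
      by rewrite !trmx_mul !mulmxA.
    by rewrite k1 h4.
  have h1' : M *m (X *m M) = M by rewrite mulmxA.
  by rewrite e k4 h4 -!mulmxA h1'.
by rewrite -h2 -mulmxA eMX mulmxA eXM k2.
Qed.

Lemma MP_tr (R : realType) p (M X : 'M[R]_p) : M^T = M -> is_MP M X -> is_MP M X^T.
Proof.
move=> sM [h1 h2 h3 h4]; split.
- have t := congr1 trmx h1; rewrite !trmx_mul sM mulmxA in t; exact: t.
- have t := congr1 trmx h2; rewrite !trmx_mul sM mulmxA in t; exact: t.
- by rewrite trmx_mul trmxK sM -h4 trmx_mul sM.
- by rewrite trmx_mul trmxK sM -h3 trmx_mul sM.
Qed.

Lemma mpinv_props (R : realType) p (M : 'M[R]_p) : M^T = M ->
  (mpinv M)^T = mpinv M /\ mpinv M *m M *m mpinv M = mpinv M.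
Proof.
move=> sM; rewrite /mpinv; case: xgetP => [X _ hX|_]; last first.
  by rewrite trmx0 !mul0mx.
have hX' : is_MP M X := hX.
split; last by case: hX'.
exact: (@MP_uniq R p p M (X^T) X (@MP_tr R p M X sM hX') hX').
Qed.

Section Sk.
Variables (R : realType) (m n : nat) (A : 'M[R]_(m, n)) (b : 'cV[R]_m) (B : 'M[R]_n).
Variables (d : measure_display) (T : measurableType d).
Variables (q : T -> nat) (S : forall t : T, 'M[R]_(m, q t)).
Hypothesis spdB : spd B.

Lemma B_sym : B^T = B. Proof. by case: spdB. Qed.

Lemma qfB_ge0 x : 0 <= qf B x x.
Proof.
have [->|nz] := eqVneq x 0; first by rewrite qf0l.
by apply/ltW; case: spdB => _ /(_ x nz).
Qed.

Lemma B_unit : B \in unitmx.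
Proof.
rewrite -row_free_unit -kermx_eq0; apply/eqP/row_matrixP => i.
rewrite row0; set u := row i (kermx B).
have uB : u *m B = 0 by apply/sub_kermxP; exact: row_sub.
apply/eqP; apply/negPn/negP => nz.
have nz' : u^T != 0 by rewrite trmx_eq0.
case: spdB => _ /(_ _ nz'); rewrite trmxK uB mul0mx mxE ltxx //.
Qed.

Lemma Bi_sym : (invmx B)^T = invmx B.
Proof. by rewrite trmx_inv B_sym. Qed.

Lemma Bi_ge0 y : 0 <= qf (invmx B) y y.
Proof.
have -> : qf (invmx B) y y = qf B (invmx B *m y) (invmx B *m y).
  rewrite /qf trmx_mul Bi_sym; congr (_ 0 0).
  by rewrite -!mulmxA [B *m (_ *m _)]mulmxA mulmxV ?B_unit // mul1mx.
exact: qfB_ge0.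
Qed.

Definition Mm (t : T) := (S t)^T *m A *m invmx B *m A^T *m S t.

Lemma Msym t : (Mm t)^T = Mm t.
Proof. by rewrite /Mm !trmx_mul !trmxK Bi_sym !mulmxA. Qed.

Lemma Mpsd t y : 0 <= qf (Mm t) y y.
Proof.
have -> : qf (Mm t) y y = qf (invmx B) (A^T *m S t *m y) (A^T *m S t *m y).
  by rewrite /qf /Mm !trmx_mul !trmxK !mulmxA.
exact: Bi_ge0.
Qed.

Lemma Hsym t : (Hmat A B S t)^T = Hmat A B S t.
Proof.
rewrite /Hmat -/(Mm t); have [sX _] := mpinv_props (Msym t).
by rewrite !trmx_mul trmxK sX mulmxA.
Qed.

Lemma Zsym t : (Zmat A B S t)^T = Zmat A B S t.
Proof.
rewrite /Zmat; move: (Hsym t); set H := Hmat _ _ _ t => sH; clearbody H.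
by rewrite !trmx_mul trmxK sH mulmxA.
Qed.

Lemma ZBiZ t : Zmat A B S t *m invmx B *m Zmat A B S t = Zmat A B S t.
Proof.
have [_ XMX] := mpinv_props (Msym t).
rewrite /Zmat /Hmat; set X := mpinv _.
change (X *m Mm t *m X = X) in XMX.
transitivity (A^T *m S t *m (X *m Mm t *m X) *m (S t)^T *m A).
  by rewrite /Mm !mulmxA.
by rewrite XMX !mulmxA.
Qed.

Lemma Zpsd t u : 0 <= qf (Zmat A B S t) u u.
Proof.
have [sX XMX] := mpinv_props (Msym t).
set w := (S t)^T *m A *m u.
have -> : qf (Zmat A B S t) u u = qf (Mm t) (mpinv (Mm t) *m w) (mpinv (Mm t) *m w).
  rewrite /qf trmx_mul sX; congr (_ 0 0).
  transitivity (u^T *m A^T *m S t *m (mpinv (Mm t) *m Mm t *m mpinv (Mm t)) *m (S t)^T *m A *m u).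
    by rewrite XMX /Zmat /Hmat !mulmxA.
  by rewrite /w !trmx_mul trmxK !mulmxA.
exact: Mpsd.
Qed.

End Sk.

Lemma qf_expand (R : realType) n (M : 'M[R]_n) u v :
  qf M u v = \sum_i \sum_j (u i 0 * v j 0) * M i j.
Proof.
rewrite /qf mxE; under eq_bigr do rewrite mxE mulr_suml.
rewrite exchange_big; apply: eq_bigr => i _; apply: eq_bigr => j _.
by rewrite !mxE mulrAC.
Qed.

Section Sk2.
Variables (R : realType) (m n : nat) (A : 'M[R]_(m, n)) (b : 'cV[R]_m) (B : 'M[R]_n).
Variables (d : measure_display) (T : measurableType d).
Variables (q : T -> nat) (S : forall t : T, 'M[R]_(m, q t)).
Hypothesis spdB : spd B.
Variable xs : 'cV[R]_n.
Hypothesis hA : A *m xs = b.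
Local Notation Z := (Zmat A B S).

Lemma fS_eq t x : fS A b B S t x = 2^-1 * qf (Z t) (x - xs) (x - xs).
Proof. by rewrite /fS /qf -hA -mulmxBr trmx_mul /Zmat !mulmxA. Qed.

Lemma grad_eq t x : gradfS A b B S t x = invmx B *m Z t *m (x - xs).
Proof. by rewrite /gradfS -hA -mulmxBr /Zmat !mulmxA. Qed.

Lemma qfB_grad t v r : qf B v (invmx B *m Z t *m r) = qf (Z t) v r.
Proof.
rewrite /qf !mulmxA -[v^T *m B *m invmx B]mulmxA mulmxV ?(B_unit spdB) //.
by rewrite mulmx1.
Qed.

Lemma qfB_gg t r : qf B (invmx B *m Z t *m r) (invmx B *m Z t *m r) = qf (Z t) r r.
Proof.
rewrite qfB_grad qf_sym; last first. have := Zsym A S spdB t. move=> hh. exact hh.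
by rewrite /qf -[in RHS](ZBiZ A S spdB t) !mulmxA.
Qed.

Variable P : probability T R.
Hypothesis hint : forall i j, P.-integrable setT (fun t => (Z t i j)%:E).

Definition EZ : 'M[R]_n := \matrix_(i, j) fine (\int[P]_t (Z t i j)%:E)%E.

Lemma int_qf u v : P.-integrable setT (fun t => (qf (Z t) u v)%:E) /\
  (\int[P]_t (qf (Z t) u v)%:E = (qf EZ u v)%:E)%E.
Proof.
have -> : (fun t => (qf (Z t) u v)%:E) =
  (fun t => \sum_(i < n) \sum_(j < n) ((u i 0 * v j 0)%:E * (Z t i j)%:E))%E.
  apply/funext => t; rewrite qf_expand -sumEFin; apply: eq_bigr => i _.
  by rewrite -sumEFin; apply: eq_bigr => j _; rewrite EFinM.
split.
  apply: integrable_sum => // i _; apply: integrable_sum => // j _.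
  exact: integrableZl.
rewrite integral_sum //; last first.
  by move=> i; apply: integrable_sum => // j _; exact: integrableZl.
rewrite qf_expand -sumEFin; apply: eq_bigr => i _.
rewrite integral_sum //; last by move=> j; exact: integrableZl.
rewrite -sumEFin; apply: eq_bigr => j _.
rewrite integralZl // /EZ mxE [RHS]EFinM fineK //; exact: integrable_fin_num.
Qed.


Lemma EZsym u v : qf EZ u v = qf EZ v u.
Proof.
have [_ h1] := int_qf u v; have [_ h2] := int_qf v u.
apply/eqP; rewrite -eqe -h1 -h2; apply/eqP; apply: eq_integral => t _.
congr (_%:E); apply: qf_sym; exact (Zsym A S spdB t).
Qed.

Lemma EZpsd u : 0 <= qf EZ u u.
Proof.
have [_ h] := int_qf u u; rewrite -lee_fin -h.
apply: integral_ge0 => t _; rewrite lee_fin; exact (Zpsd A S spdB t u).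
Qed.

Definition fq (x : 'cV[R]_n) : R := 2^-1 * qf EZ (x - xs) (x - xs).

Lemma fexp_eq x : fexp A b B S P x = (fq x)%:E.
Proof.
rewrite /fexp /fq; have [i h] := int_qf (x - xs) (x - xs).
under eq_integral do rewrite fS_eq EFinM.
by rewrite integralZl // h -EFinM.
Qed.

Lemma fq_ge0 x : 0 <= fq x.
Proof. rewrite /fq mulr_ge0 //; exact: EZpsd. Qed.

Lemma EZorth u w : qf EZ u u = 0 -> qf EZ w u = 0.
Proof.
move=> h0; set al := qf EZ w u; set K := qf EZ w w.
have K0 : 0 <= K by exact: EZpsd.
set s := - al / (K + 1).
have H := EZpsd (u + s *: w).
rewrite !qfDl !qfDr !qfZl !qfZr h0 (EZsym u w) -/al -/K in H.
have K1 : K + 1 != 0 by rewrite gt_eqF // ltr_wpDl.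
have H2 : 0 <= (K + 1) ^+ 2 * (0 + s * al + (s * al + s * (s * K))).
  by rewrite mulr_ge0 // sqr_ge0.
have E : (K + 1) ^+ 2 * (0 + s * al + (s * al + s * (s * K))) = - (al ^+ 2 * (K + 2)).
  rewrite /s; field; exact: K1.
rewrite E oppr_ge0 in H2.
have : al ^+ 2 <= 0 by nra.
by move=> h; apply/eqP; rewrite -sqrf_eq0 eq_le h sqr_ge0.
Qed.

End Sk2.

Section Tel.
Variables (d : measure_display) (T : measurableType d) (R : realType) (P : probability T R).
Local Open Scope ereal_scope.

Lemma int_mono_ge0 (f g : T -> \bar R) : (forall t, 0 <= f t) -> (forall t, f t <= g t) ->
  \int[P]_t f t <= \int[P]_t g t.
Proof.
move=> f0 fg; have g0 t : 0 <= g t by apply: le_trans (fg t).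
rewrite !ge0_integralTE //; apply: ereal_sup_le => _ [h hf <-]; exists h => //= x.
exact: le_trans (hf x) (fg x).
Qed.

Lemma Eiid_ge0 N g : (forall s, size s = N -> 0 <= g s) -> 0 <= Eiid P N g.
Proof.
elim: N g => [|N IH] g h /=; first exact: h.
apply: integral_ge0 => t _; apply: IH => s hs; apply: h; by rewrite /= hs.
Qed.

Lemma Eiid_mono N g1 g2 : (forall s, size s = N -> 0 <= g1 s) ->
  (forall s, size s = N -> g1 s <= g2 s) -> Eiid P N g1 <= Eiid P N g2.
Proof.
elim: N g1 g2 => [|N IH] g1 g2 h0 h /=; first exact: h.
apply: int_mono_ge0 => t.
  by apply: Eiid_ge0 => s hs; apply: h0; rewrite /= hs.
by apply: IH => s hs; [apply: h0 | apply: h]; rewrite /= hs.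
Qed.

Local Close Scope ereal_scope.
Variables (X : Type) (step : X -> T -> X) (h W : X -> R).

Definition Fh (sg : X) (s : seq T) : R := \sum_(j < (size s).+1) h (foldl step sg (take j s)).

Lemma Fh_cons sg t s : Fh sg (t :: s) = h sg + Fh (step sg t) s.
Proof. by rewrite /Fh /= big_ord_recl /= ?take0. Qed.

Hypothesis h0 : forall sg, 0 <= h sg.
Hypothesis W0 : forall sg, 0 <= W sg.
Hypothesis Wint : forall sg, P.-integrable setT (fun t => (W (step sg t))%:E).
Hypothesis Wstep : forall sg, (\int[P]_t (W (step sg t))%:E <= (W sg - h sg)%:E)%E.

Lemma Fh_ge0 sg s : 0 <= Fh sg s.
Proof. by apply: sumr_ge0 => j _. Qed.

Lemma telescope N : forall sg acc, 0 <= acc ->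
  (Eiid P N (fun s => (acc + Fh sg s)%:E) <= (acc + W sg)%:E)%E.
Proof.
elim: N => [|N IH] sg acc acc0 /=.
  rewrite /Fh /= big_ord1 /= lee_fin lerD2l.
  have := Wstep sg; have := integral_ge0 P (D := setT) (f := fun t => (W (step sg t))%:E).
  move=> /(_ (fun t _ => W0 _)) hge hle.
  have := le_trans hge hle; rewrite lee_fin subr_ge0 //.
have -> : (fun t => Eiid P N (fun s => (acc + Fh sg (t :: s))%:E)) =
    (fun t => Eiid P N (fun s => ((acc + h sg) + Fh (step sg t) s)%:E)).
  apply/funext => t; congr (Eiid P N _); apply/funext => s.
  by rewrite Fh_cons addrA.
apply: (@le_trans _ _ (\int[P]_t ((acc + h sg)%:E + (W (step sg t))%:E))%E).
  apply: int_mono_ge0 => t.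
    by apply: Eiid_ge0 => s _; rewrite lee_fin addr_ge0 // ?Fh_ge0 // addr_ge0.
  by rewrite -EFinD; apply: IH; rewrite addr_ge0.
rewrite integralD //; last first.
  exact: finite_measure_integrable_cst.
have hP : ((P : {measure set T -> \bar R}) setT = 1)%E by exact: probability_setT.
rewrite integral_cst // hP mule1.
apply: (@le_trans _ _ ((acc + h sg)%:E + (W sg - h sg)%:E))%E.
  by rewrite leeD2l.
by rewrite -EFinD lee_fin; lra.
Qed.

End Tel.

Section Sk3.
Variables (R : realType) (m n : nat) (A : 'M[R]_(m, n)) (b : 'cV[R]_m) (B : 'M[R]_n).
Variables (d : measure_display) (T : measurableType d).
Variables (q : T -> nat) (S : forall t : T, 'M[R]_(m, q t)).
Hypothesis spdB : spd B.
Variable xs : 'cV[R]_n.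
Hypothesis hA : A *m xs = b.
Variable P : probability T R.
Local Notation Z := (Zmat A B S).
Hypothesis hint : forall i j, P.-integrable setT (fun t => (Z t i j)%:E).
Local Notation Q := (qf (EZ A B S P)).
Local Notation F := (fq A B S xs P).
Variables (omega beta lam : R) (xstar : 'cV[R]_n).
Hypotheses (hb0 : 0 <= beta) (hb1 : beta < 1) (hom : 0 < omega) (hlam : 0 <= lam).
Hypothesis hstar : Q (xstar - xs) (xstar - xs) = 0.

Definition aa := omega / (1 - beta).
Definition gam := beta / (1 - beta).
Definition cc := 2 * aa * gam.
Definition DD := 4 * aa - 2 * aa ^+ 2.
Definition zz (sg : 'cV[R]_n * 'cV[R]_n) := sg.2 + gam *: (sg.2 - sg.1).
Definition Wf sg := lam * (qf B (zz sg - xstar) (zz sg - xstar) + cc * F sg.1).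
Definition hf (sg : 'cV[R]_n * 'cV[R]_n) := lam * DD * F sg.2.
Local Notation step := (hb_step A b B S omega beta).

Lemma b1 : 1 - beta != 0.
Proof. by rewrite subr_eq0 gt_eqF. Qed.

Lemma zz_step sg t : zz (step sg t) - xstar =
  (zz sg - xstar) - aa *: gradfS A b B S t sg.2.
Proof.
rewrite /zz /hb_step /aa /gam /=; apply/matrixP => i j; rewrite !mxE.
by field; exact: b1.
Qed.

Lemma qfB_exp (v g : 'cV[R]_n) a :
  qf B (v - a *: g) (v - a *: g) = qf B v v - 2 * a * qf B v g + a ^+ 2 * qf B g g.
Proof.
rewrite !qfBl !qfBr !qfZl !qfZr [qf B g v]qf_sym; last exact: (B_sym spdB).
ring.
Qed.

Lemma Wstep_eq sg t : Wf (step sg t) =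
  lam * (qf B (zz sg - xstar) (zz sg - xstar)
         - 2 * aa * qf (Z t) (zz sg - xstar) (sg.2 - xs)
         + aa ^+ 2 * qf (Z t) (sg.2 - xs) (sg.2 - xs) + cc * F sg.2).
Proof.
rewrite /Wf zz_step (grad_eq B S hA t sg.2) /= qfB_exp.
by rewrite (qfB_grad A S spdB) (qfB_gg A S spdB).
Qed.

Lemma Wstep_int sg :
  P.-integrable setT (fun t => (Wf (step sg t))%:E) /\
  (\int[P]_t (Wf (step sg t))%:E =
   (lam * (qf B (zz sg - xstar) (zz sg - xstar)
         - 2 * aa * Q (zz sg - xstar) (sg.2 - xs)
         + aa ^+ 2 * Q (sg.2 - xs) (sg.2 - xs) + cc * F sg.2))%:E)%E.
Proof.
set v := zz sg - xstar; set rx := sg.2 - xs.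
have [i1 e1] := int_qf hint v rx; have [i2 e2] := int_qf hint rx rx.
have -> : (fun t => (Wf (step sg t))%:E) = (fun t =>
   (lam * (qf B v v + cc * F sg.2))%:E +
   ((- (lam * 2 * aa))%:E * (qf (Z t) v rx)%:E + (lam * aa ^+ 2)%:E * (qf (Z t) rx rx)%:E))%E.
  apply/funext => t; rewrite Wstep_eq -!EFinM -!EFinD; congr (_%:E); rewrite -/v -/rx; ring.
have ic : P.-integrable setT (fun _ : T => (lam * (qf B v v + cc * F sg.2))%:E).
  exact: finite_measure_integrable_cst.
have i3 := integrableZl measurableT (- (lam * 2 * aa)) i1.
have i4 := integrableZl measurableT (lam * aa ^+ 2) i2.
split.
  apply: integrableD => //; exact: integrableD.
rewrite integralD //; last exact: integrableD.
rewrite integralD // integralZl // integralZl // e1 e2.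
have hP : ((P : {measure set T -> \bar R}) setT = 1)%E by exact: probability_setT.
rewrite integral_cst // hP mule1 -!EFinM -!EFinD; congr (_%:E); ring.
Qed.

Lemma Q_sq (u w : 'cV[R]_n) : Q (u - w) (u - w) = Q u u - 2 * Q w u + Q w w.
Proof. rewrite !qfBl !qfBr (EZsym spdB hint u w); ring. Qed.

Lemma Q_lin (u w z : 'cV[R]_n) g : Q (u - w + g *: z) u = Q u u - Q w u + g * Q z u.
Proof. by rewrite qfDl qfBl qfZl. Qed.

Lemma onestep sg : (\int[P]_t (Wf (step sg t))%:E <= (Wf sg - hf sg)%:E)%E.
Proof.
rewrite (Wstep_int sg).2 lee_fin.
set v := zz sg - xstar; set rx := sg.2 - xs; set dd := sg.2 - sg.1.
set rs := xstar - xs.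
have ev : v = rx - rs + gam *: dd.
  rewrite /v /rx /rs /dd /zz; apply/matrixP => i j; rewrite !mxE; ring.
have e0 : Q rs rx = 0.
  rewrite (EZsym spdB hint); exact: (EZorth spdB hint).
have eQv : Q v rx = Q rx rx + gam * Q dd rx.
  by rewrite ev Q_lin e0 subr0.
have ep : sg.1 - xs = rx - dd.
  rewrite /rx /dd; apply/matrixP => i j; rewrite !mxE; ring.
have eF1 : F sg.1 = 2^-1 * (Q rx rx - 2 * Q dd rx + Q dd dd).
  by rewrite /fq ep Q_sq.
have eF2 : F sg.2 = 2^-1 * Q rx rx by [].
have A3 : 0 <= Q dd dd by exact: (EZpsd spdB hint).
have ga : 0 <= gam by rewrite /gam; apply: divr_ge0 => //; rewrite subr_ge0 ltW.
have a0 : 0 <= aa by rewrite /aa; apply: divr_ge0; [exact: ltW | rewrite subr_ge0 ltW].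
rewrite /Wf /hf -/v eQv eF1 eF2 -subr_ge0.
set BV := qf B v v; set A1 := Q rx rx; set A2 := Q dd rx; set A3' := Q dd dd.
have -> : lam * (BV + cc * (2^-1 * (A1 - 2 * A2 + A3'))) - lam * DD * (2^-1 * A1) -
   lam * (BV - 2 * aa * (A1 + gam * A2) + aa ^+ 2 * A1 + cc * (2^-1 * A1)) =
   lam * aa * gam * A3' by rewrite /cc /DD; field.
apply: mulr_ge0 => //; apply: mulr_ge0 => //; exact: mulr_ge0.
Qed.

Lemma Wf_ge0 sg : 0 <= Wf sg.
Proof.
have ga : 0 <= gam by rewrite /gam; apply: divr_ge0 => //; rewrite subr_ge0 ltW.
have a0 : 0 <= aa by rewrite /aa; apply: divr_ge0; [exact: ltW | rewrite subr_ge0 ltW].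
rewrite /Wf; apply: mulr_ge0 => //; apply: addr_ge0; first exact: (qfB_ge0 spdB).
apply: mulr_ge0; first by rewrite /cc; apply: mulr_ge0 => //; apply: mulr_ge0.
rewrite /fq; apply: mulr_ge0 => //; exact: (EZpsd spdB hint).
Qed.

End Sk3.

Lemma qf_sumr (R : realType) n (M : 'M[R]_n) (I : Type) (r : seq I) (Pr : pred I)
  (F : I -> 'cV[R]_n) v :
  qf M v (\sum_(i <- r | Pr i) F i) = \sum_(i <- r | Pr i) qf M v (F i).
Proof.
elim/big_rec2: _ => [|i y1 y2 _ <-]; first by rewrite /qf mulmx0 mxE.
by rewrite qfDr.
Qed.

Section Jen.
Variables (R : realType) (m n : nat) (A : 'M[R]_(m, n)) (B : 'M[R]_n).
Variables (d : measure_display) (T : measurableType d).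
Variables (q : T -> nat) (S : forall t : T, 'M[R]_(m, q t)).
Hypothesis spdB : spd B.
Variable xs : 'cV[R]_n.
Variable P : probability T R.
Hypothesis hint : forall i j, P.-integrable setT (fun t => (Zmat A B S t i j)%:E).
Local Notation Q := (qf (EZ A B S P)).
Local Notation F := (fq A B S xs P).

Lemma jensen k (y : 'I_k -> 'cV[R]_n) : (0 < k)%N ->
  F ((k%:R)^-1 *: \sum_j y j) <= (k%:R)^-1 * \sum_j F (y j).
Proof.
move=> k0; have kn : k%:R != 0 :> R by rewrite pnatr_eq0 -lt0n.
have kp : 0 < k%:R :> R by rewrite ltr0n.
set ub := (k%:R)^-1 *: \sum_j (y j - xs).
have e1 : (k%:R)^-1 *: \sum_j y j - xs = ub.
  rewrite /ub sumrB scalerBr sumr_const card_ord -[xs *+ k]scaler_nat scalerA mulVf //.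
  by rewrite scale1r.
have e2 : \sum_j (y j - xs) = k%:R *: ub by rewrite /ub scalerA mulfV // scale1r.
have key : 0 <= \sum_j Q ((y j - xs) - ub) ((y j - xs) - ub).
  by apply: sumr_ge0 => j _; exact: (EZpsd spdB hint).
have ex : \sum_j Q ((y j - xs) - ub) ((y j - xs) - ub) =
          \sum_j Q (y j - xs) (y j - xs) - k%:R * Q ub ub.
  rewrite (eq_bigr (fun j => Q (y j - xs) (y j - xs) + (- (2 * Q ub (y j - xs)) + Q ub ub))); last first.
    by move=> j _; rewrite [LHS](Q_sq spdB hint) addrA.
  rewrite big_split /= big_split /= sumr_const card_ord sumrN -mulr_sumr -qf_sumr e2 qfZr.
  rewrite -mulr_natl; ring.
rewrite ex subr_ge0 in key.
rewrite /fq e1 -subr_ge0.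
have -> : (k%:R)^-1 * (\sum_j 2^-1 * Q (y j - xs) (y j - xs)) - 2^-1 * Q ub ub =
  2^-1 * (k%:R)^-1 * (\sum_j Q (y j - xs) (y j - xs) - k%:R * Q ub ub).
  rewrite -mulr_sumr; field; exact: kn.
by apply: mulr_ge0; [apply: mulr_ge0; rewrite ?invr_ge0 ?ler0n | rewrite subr_ge0].
Qed.
End Jen.

Unset Implicit Arguments.

Theorem mainTheorem3 (R : realType) (m n : nat)
  (A : 'M[R]_(m, n)) (b : 'cV[R]_m) (B : 'M[R]_n)
  (d : measure_display) (T : measurableType d) (P : probability T R)
  (q : T -> nat) (S : forall t : T, 'M[R]_(m, q t))
  (omega beta : R) (x0 xstar : 'cV[R]_n) :
  (exists x : 'cV[R]_n, A *m x = b) ->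
  spd B ->
  (forall i j, P.-integrable setT (fun t => (Zmat A B S t i j)%:E)) ->
  0 <= beta -> beta < 1 -> 0 < omega -> omega + 2 * beta < 2 ->
  fexp A b B S P xstar = 0%E ->
  forall k : nat, (1 <= k)%N ->
    (Eiid P k.-1 (fun s => fexp A b B S P (hb_avg A b B S omega beta x0 k s))
     <= (((2 * omega * (2 - 2 * beta - omega) * k%:R)^-1)%:E *
         (((1 - beta) ^+ 2 * normB2 B (x0 - xstar))%:E
          + (2 * omega * beta)%:E * fexp A b B S P x0)))%E.
Proof.
move=> [xs hA] spdB hint hb0 hb1 hom hsum hstar k k1.
have kn : k%:R != 0 :> R by rewrite pnatr_eq0 -lt0n.
have kp : 0 < k%:R :> R by rewrite ltr0n.
have b1 : 1 - beta != 0 by rewrite subr_eq0 gt_eqF.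
have b1p : 0 < 1 - beta by rewrite subr_gt0.
have c2 : 0 < 2 - 2 * beta - omega by lra.
have eD : DD omega beta = 2 * omega * (2 - 2 * beta - omega) / (1 - beta) ^+ 2.
  by rewrite /DD /aa; field.
have Dp : 0 < DD omega beta.
  by rewrite eD; apply: divr_gt0; [rewrite !mulr_gt0 | rewrite exprn_gt0].
have hst : qf (EZ A B S P) (xstar - xs) (xstar - xs) = 0.
  move: hstar; rewrite (fexp_eq hA hint) /fq => /eqP; rewrite eqe mulf_eq0 invr_eq0.
  by rewrite pnatr_eq0 /= => /eqP.
set lam := (k%:R * DD omega beta)^-1.
have lp : 0 <= lam by rewrite /lam invr_ge0 ltW // mulr_gt0.
set step := hb_step A b B S omega beta.
set hh := hf A B S xs P omega beta lam.
set WW := Wf A B S xs P omega beta lam xstar.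
have h0 sg : 0 <= hh sg.
  rewrite /hh /hf; apply: mulr_ge0; first by apply: mulr_ge0 => //; exact: ltW.
  exact: (fq_ge0 spdB xs hint).
have W0 sg : 0 <= WW sg by exact: (Wf_ge0 spdB xs hint xstar hb0 hb1 hom lp).
have Wint sg : P.-integrable setT (fun t => (WW (step sg t))%:E).
  exact: (Wstep_int spdB hA hint omega lam xstar hb1 sg).1.
have Wst sg : (\int[P]_t (WW (step sg t))%:E <= (WW sg - hh sg)%:E)%E.
  exact: (onestep spdB hA hint hb0 hb1 hom lp hst sg).
have tel := telescope h0 W0 Wint Wst k.-1 (x0, x0) (lexx 0).
apply: le_trans (Eiid_mono (g2 := fun s => (0 + Fh step hh (x0, x0) s)%:E) P _ _) _.
- move=> s _; rewrite (fexp_eq hA hint) lee_fin; exact: (fq_ge0 spdB xs hint).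
- move=> s hs; rewrite (fexp_eq hA hint) lee_fin add0r /Fh hs prednK //.
  apply: le_trans (jensen spdB xs hint _ k1) _.
  rewrite mulr_sumr; apply: ler_sum => j _; rewrite /hh /hf /lam.
  rewrite le_eqVlt; apply/orP; left; apply/eqP.
  rewrite /hb_iter /hb_pair; congr (_ * _); field.
  by rewrite gt_eqF.
apply: le_trans tel _.
rewrite add0r (fexp_eq hA hint) -EFinM lee_fin.
rewrite /WW /Wf /zz /= subrr scaler0 addr0 le_eqVlt; apply/orP; left; apply/eqP.
rewrite /lam eD /cc /aa /gam /normB2 /qf; field.
by rewrite kn b1 !gt_eqF.
Qed.
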